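(* Let $N$ be a finite or infinite set and let $\mathcal A'\subseteq\mathcal P(N)$ with $\emptyset,N\in\mathcal A'$. Let $v'\colon\mathcal A'\to\mathbb R$ be a coalition function with $v'(\emptyset)=0$. If $v'$ is bounded below (there is $L\in\mathbb R$ with $v'(S)\ge L$ for all $S\in\mathcal A'$), then $\mathrm{ba\text{-}core}(v')\neq\emptyset$ if and only if $v'$ is bounded-balanced.
   Context: $\mathrm{field}(\mathcal A')$ denotes the smallest field of sets over $N$ containing $\mathcal A'$ (a field of sets over $N$ is a collection containing $\emptyset$, closed under complements in $N$ and finite unions). For a field $\mathcal A$, $\mathrm{ba}(\mathcal A)$ is the set of bounded additive set functions $\mu\colon\mathcal A\to\mathbb R$ ($\sup_{S\in\mathcal A}|\mu(S)|<\infty$ and $\mu(S\cup T)=\mu(S)+\mu(T)$ for disjoint $S,T\in\mathcal A$). The core is $\mathrm{ba\text{-}core}(v')=\{\mu\in\mathrm{ba}(\mathrm{field}(\mathcal A')):\mu(N)=v'(N),\ \mu(S)\ge v'(S)\text{ for all }S\in\mathcal A'\setminus\{N\}\}$. For a field $\mathcal A$ and $v\colon\mathcal A\to\mathbb R$ with $v(\emptyset)=0$: a finite collection $\{S_1,\dots,S_r\}\subseteq\mathcal A$ is balanced if there are reals $\lambda_1,\dots,\lambda_r\ge0$ with $\sum_p\lambda_p\chi_{S_p}=\chi_N$ ($\chi_S$ the characteristic function of $S$ on $N$), and $v$ is balanced if $\sum_p\lambda_p v(S_p)\le v(N)$ for every balanced collection in $\mathcal A$ and every such choice of weights. The game $v'$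 is bounded-balanced if there exists a coalition function $v\colon\mathrm{field}(\mathcal A')\to\mathbb R$ with $v(\emptyset)=0$ that is bounded below and balanced and satisfies $v(S)=v'(S)$ for all $S\in\mathcal A'$. *)

(* Defs.v *)
From HB Require Import structures.
From mathcomp Require Import all_boot all_order all_algebra.
From mathcomp Require Import boolp classical_sets reals.
Set Implicit Arguments. Unset Strict Implicit. Unset Printing Implicit Defensive.
Import Order.TTheory GRing.Theory Num.Theory.
Local Open Scope classical_set_scope.
Local Open Scope ring_scope.

Definition is_field_of_sets {T : Type} (F : set (set T)) : Prop :=
  F set0 /\ (forall S, F S -> F (~` S)) /\
  (forall S U, F S -> F U -> F (S `|` U)).

Definition field_gen {T : Type} (A : set (set T)) : set (set T) :=
  fun S => forall F, is_field_of_sets F -> A `<=` F -> F S.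

Definition chi {R : realType} {T : Type} (S : set T) (x : T) : R :=
  (x \in S)%:R.

Definition is_ba {R : realType} {T : Type} (F : set (set T))
  (mu : set T -> R) : Prop :=
  (exists M : R, forall S, F S -> `|mu S| <= M) /\
  (forall S U, F S -> F U -> S `&` U = set0 -> mu (S `|` U) = mu S + mu U).

(* ba-core(v') for the game (A', v'); v' is only used on A'. *)
Definition ba_core {R : realType} {T : Type} (A' : set (set T))
  (v' : set T -> R) : set (set T -> R) :=
  fun mu => is_ba (field_gen A') mu /\ mu setT = v' setT /\
    (forall S, A' S -> S <> setT -> v' S <= mu S).

Definition balanced_coll {R : realType} {T : Type} (F : set (set T))
  (r : nat) (S : 'I_r -> set T) (lam : 'I_r -> R) : Prop :=
  (forall p, F (S p)) /\ (forall p q, S p = S q -> p = q) /\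
  (forall p, 0 <= lam p) /\
  (forall x : T, \sum_(p < r) lam p * chi (S p) x = chi setT x).

Definition balanced_fun {R : realType} {T : Type} (F : set (set T))
  (v : set T -> R) : Prop :=
  forall (r : nat) (S : 'I_r -> set T) (lam : 'I_r -> R),
    balanced_coll F S lam -> \sum_(p < r) lam p * v (S p) <= v setT.

Definition bounded_below_on {R : realType} {T : Type} (F : set (set T))
  (v : set T -> R) : Prop :=
  exists L : R, forall S, F S -> L <= v S.

Definition bounded_balanced {R : realType} {T : Type} (A' : set (set T))
  (v' : set T -> R) : Prop :=
  exists v : set T -> R, v set0 = 0 /\ bounded_below_on (field_gen A') v /\
    balanced_fun (field_gen A') v /\ (forall S, A' S -> v S = v' S).

(* Main.v *)
Require Import Defs.
From HB Require Import structures.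
From mathcomp Require Import all_boot all_order all_algebra.
From mathcomp Require Import boolp classical_sets functions reals.
From mathcomp Require Import ring lra.
Set Implicit Arguments. Unset Strict Implicit. Unset Printing Implicit Defensive.
Import Order.TTheory GRing.Theory Num.Theory.
Local Open Scope classical_set_scope.
Local Open Scope ring_scope.


Section HBsec.
Variables (R : realType) (V : lmodType R) (W : set V) (p : V -> R).
Hypothesis W0 : W 0.
Hypothesis Wlin : forall a x y, W x -> W y -> W (a *: x + y).
Hypothesis psub : forall x y, W x -> W y -> p (x + y) <= p x + p y.
Hypothesis phom : forall a x, 0 < a -> W x -> p (a *: x) = a * p x.

Definition good (G : set (V * R)) :=
  [/\ forall c x a y b, G (x, a) -> G (y, b) -> G (c *: x + y, c * a + b),
      forall x a b, G (x, a) -> G (x, b) -> a = b &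
      forall x a, G (x, a) -> W x /\ a <= p x].

Lemma p0 : p 0 = 0.
Proof.
have := phom (x:=0) (a:=2) ltac:(lra) W0; rewrite scaler0 => h.
lra.
Qed.

Lemma good_chain (F : set (set (V * R))) : F `<=` good -> total_on F subset ->
  good (\bigcup_(X in F) X).
Proof.
move=> FG tot; split.
- move=> c x a y b [X FX Xa] [Y FY Yb].
  have [XY|YX] := tot _ _ FX FY.
  + exists Y => //; have [h _ _] := FG _ FY; exact: (h c x a y b (XY _ Xa) Yb).
  + exists X => //; have [h _ _] := FG _ FX; exact: (h c x a y b Xa (YX _ Yb)).
- move=> x a b [X FX Xa] [Y FY Yb].
  have [XY|YX] := tot _ _ FX FY.
  + have [_ h _] := FG _ FY; exact: (h x a b (XY _ Xa) Yb).
  + have [_ h _] := FG _ FX; exact: (h x a b Xa (YX _ Yb)).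
- by move=> x a [X FX Xa]; have [_ _ h] := FG _ FX; exact: (h x a Xa).
Qed.

Lemma good_zero G : good G -> (exists z, G z) -> G (0, 0).
Proof.
move=> [h _ _] [[x a] Ga]; have := h (-1) x a x a Ga Ga.
by rewrite scaleN1r addNr mulN1r addNr.
Qed.

Lemma good_scale G x a c : good G -> G (x, a) -> G (c *: x, c * a).
Proof.
move=> gG Ga; have [h _ _] := gG.
have := h c x a 0 0 Ga (good_zero gG (ex_intro _ _ Ga)).
by rewrite addr0 addr0.
Qed.

Lemma hahn_banach : exists f : V -> R,
  (forall a x y, W x -> W y -> f (a *: x + y) = a * f x + f y) /\
  (forall x, W x -> f x <= p x).
Proof.
have [A [gA maxA]] := Zorn_bigcup good_chain.
have Ane : exists z, A z.
  apply: contrapT => nA.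
  apply: (maxA [set (0, 0)]).
  - split; first by move=> z Az; exfalso; apply: nA; exists z.
    by move=> sub; apply: nA; exists (0, 0); apply: sub.
  - split.
    + by move=> c x a y b [-> ->] [-> ->]; rewrite scaler0 mulr0 !addr0.
    + by move=> x a b [_ ->] [_ ->].
    + by move=> x a [-> ->]; split => //; rewrite p0.
have A0 := good_zero gA Ane.
have [Alin Afun Adom] := gA.
have dom : forall g, W g -> exists a, A (g, a).
  move=> g Wg; apply: contrapT => ng.
  have WN : forall x y, W x -> W y -> W (x - y).
    by move=> x y Wx Wy; have := Wlin (-1) Wy Wx; rewrite scaleN1r addrC.
  have WD : forall x y, W x -> W y -> W (x + y).
    by move=> x y Wx Wy; have := Wlin 1 Wx Wy; rewrite scale1r.
  have key : forall y b z d, A (y, b) -> A (z, d) -> b - p (y - g) <= p (z + g) - d.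
    move=> y b z d Ab Ad.
    have := Alin 1 _ _ _ _ Ab Ad; rewrite scale1r mul1r => Abd.
    have [Wyz le1] := Adom _ _ Abd.
    have [Wy _] := Adom _ _ Ab; have [Wz _] := Adom _ _ Ad.
    have : p (y + z) <= p (y - g) + p (z + g).
      have -> : y + z = (y - g) + (z + g) by rewrite addrACA addNr addr0.
      by apply: psub; [apply: WN | apply: WD].
    move=> le2; lra.
  pose E := [set r | exists y b, A (y, b) /\ r = b - p (y - g)].
  have En : E !=set0 by exists (0 - p (0 - g)); exists 0, 0.
  pose c := sup E.
  have c_ub : forall z d, A (z, d) -> c <= p (z + g) - d.
    move=> z d Ad; apply: ge_sup => // r [y [b [Ab ->]]]; exact: key.
  have c_lb : forall y b, A (y, b) -> b - p (y - g) <= c.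
    move=> y b Ab; apply: ub_le_sup; last by exists y, b.
    by exists (p (0 + g) - 0) => r [y' [b' [Ab' ->]]]; exact: key.
  pose A' := fun zz : V * R => exists x a t, A (x, a) /\ zz = (x + t *: g, a + t * c).
  have gA' : good A'.
    split.
    - move=> c0 _ _ _ _ [x1 [a1 [t1 [A1 [-> ->]]]]] [x2 [a2 [t2 [A2 [-> ->]]]]].
      exists (c0 *: x1 + x2), (c0 * a1 + a2), (c0 * t1 + t2); split; first exact: Alin.
      congr (_, _).
      + rewrite scalerDr scalerA scalerDl !addrA; congr (_ + _); rewrite addrAC //.
      + ring.
    - move=> _ a b [x1 [a1 [t1 [A1 [-> ->]]]]] [x2 [a2 [t2 [A2 [e ->]]]]].
      case: (eqVneq t1 t2) => [et|nt].
      + subst t2; move: e => /addIr e; subst x2.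
        by rewrite (Afun _ _ _ A1 A2).
      + exfalso; apply: ng.
        have A21 := Alin (-1) _ _ _ _ A1 A2.
        have := good_scale (t1 - t2)^-1 gA A21 => Ag.
        eexists; suff <- : (t1 - t2)^-1 *: ((-1) *: x1 + x2) = g by exact: Ag.
        have e2 : (-1) *: x1 + x2 = (t1 - t2) *: g.
          have -> : x2 = x1 + t1 *: g - t2 *: g by rewrite e addrK.
          by rewrite scaleN1r scalerBl -addrA addKr.
        by rewrite e2 scalerA mulVf ?scale1r // subr_eq0.
    - move=> _ _ [x [a [t [Aa [-> ->]]]]].
      have [Wx lea] := Adom _ _ Aa.
      split; first by rewrite addrC; apply: Wlin.
      case: (ltgtP t 0) => [tn|tp|->]; last by rewrite scale0r addr0 mul0r addr0.
      + pose s := - t.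
        have sp : 0 < s by rewrite /s oppr_gt0.
        have As := good_scale s^-1 gA Aa.
        have h1 := c_lb _ _ As.
        have h2 : p (x + t *: g) = s * p (s^-1 *: x - g).
          rewrite -phom //; last by apply: WN => //; rewrite -[_ *: x]addr0; apply: Wlin.
          by rewrite scalerBr scalerA mulfV ?gt_eqF // scale1r /s scaleNr opprK.
        rewrite h2; rewrite -(ler_pM2l sp) mulrBr mulrA mulfV ?gt_eqF // mul1r in h1.
        rewrite /s in h1 *; lra.
      + have At := good_scale t^-1 gA Aa.
        have h1 := c_ub _ _ At.
        have h2 : p (x + t *: g) = t * p (t^-1 *: x + g).
          rewrite -phom //; last by apply: WD => //; rewrite -[_ *: x]addr0; apply: Wlin.
          by rewrite scalerDr scalerA mulfV ?gt_eqF // scale1r.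
        rewrite h2; rewrite -(ler_pM2l tp) mulrBr mulrA mulfV ?gt_eqF // mul1r in h1.
        lra.
  suff pr : A `<` A' by exact: (maxA A' pr gA').
  split.
  - by move=> [x a] Aa; exists x, a, 0; rewrite scale0r addr0 mul0r addr0.
  - move=> sub; apply: ng; exists c.
    apply: sub; exists 0, 0, 1; split => //; rewrite scale1r add0r mul1r add0r //.
pose f x := xget 0 [set a | A (x, a)].
have fA : forall x, W x -> A (x, f x).
  by move=> x Wx; rewrite /f; exact: (xgetPex 0 (dom _ Wx)).
exists f; split.
- move=> a x y Wx Wy.
  have := Alin a _ _ _ _ (fA _ Wx) (fA _ Wy) => h.
  exact: (Afun _ _ _ (fA _ (Wlin a Wx Wy)) h).
- by move=> x Wx; have [] := Adom _ _ (fA _ Wx).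
Qed.
End HBsec.


Section Fld.
Variables (T : Type) (A' : set (set T)).
Local Notation F := (field_gen A').

Lemma fg_field : is_field_of_sets F.
Proof.
split; first by move=> G [].
split; first by move=> S FS G hG sub; have [_ [h _]] := hG; apply: h; apply: FS.
by move=> S U FS FU G hG sub; have [_ [_ h]] := hG; apply: h; [apply: FS|apply: FU].
Qed.

Lemma fg_sub S : A' S -> F S.
Proof. by move=> AS G _ sub; apply: sub. Qed.

Lemma fg0 : F set0. Proof. by have [] := fg_field. Qed.
Lemma fgC S : F S -> F (~` S). Proof. by have [_ []] := fg_field; auto. Qed.
Lemma fgU S U : F S -> F U -> F (S `|` U). Proof. by have [_ []] := fg_field; auto. Qed.
Lemma fgI S U : F S -> F U -> F (S `&` U).
Proof.
move=> FS FU; rewrite -[S `&` U]setCK setCI.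
by apply: fgC; apply: fgU; apply: fgC.
Qed.
Lemma fgT : F setT. Proof. by rewrite -setC0; apply: fgC; apply: fg0. Qed.
End Fld.

Section Chi.
Variables (R : realType) (T : Type).
Lemma chi_in (S : set T) x : S x -> chi (R:=R) S x = 1.
Proof. by move=> Sx; rewrite /chi mem_set. Qed.
Lemma chi_out (S : set T) x : ~ S x -> chi (R:=R) S x = 0.
Proof. by move=> Sx; rewrite /chi memNset. Qed.
Lemma chiT x : chi (R:=R) (@setT T) x = 1.
Proof. exact: chi_in. Qed.
Lemma chi_ge0 (S : set T) x : 0 <= chi (R:=R) S x.
Proof. by rewrite /chi ler0n. Qed.
Lemma chiC (S : set T) x : chi (R:=R) (~` S) x = 1 - chi S x.
Proof.
have [Sx|nSx] := pselect (S x).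
  by rewrite (chi_in (S:=S)) // (chi_out (S:=~` S)) ?subrr // => /(_ Sx).
by rewrite (chi_out (S:=S)) // (chi_in (S:=~` S)) ?subr0.
Qed.
End Chi.

Section Lin.
Variables (R : realType) (T : Type) (A' : set (set T)) (mu : set T -> R).
Local Notation F := (field_gen A').
Hypothesis madd : forall S U, F S -> F U -> S `&` U = set0 -> mu (S `|` U) = mu S + mu U.

Lemma mu0 : mu set0 = 0.
Proof.
have := madd (@fg0 _ A') (@fg0 _ A') (setI0 set0); rewrite setU0 => h.
lra.
Qed.

Lemma lin_mu (I : Type) (s : seq I) (S : I -> set T) (lam : I -> R) :
  (forall i, F (S i)) -> forall A c, F A ->
  (forall x, A x -> \sum_(i <- s) lam i * chi (S i) x = c) ->
  \sum_(i <- s) lam i * mu (S i `&` A) = c * mu A.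
Proof.
move=> FS; elim: s => [|i s IH] A c FA hA.
  rewrite big_nil.
  have [->|/set0P [x Ax]] := eqVneq A set0; first by rewrite mu0 mulr0.
  by have := hA x Ax; rewrite big_nil => <-; rewrite mul0r.
rewrite big_cons.
pose A1 := A `&` S i; pose A2 := A `&` ~` S i.
have FA1 : F A1 by apply: fgI.
have FA2 : F A2 by apply: fgI => //; apply: fgC.
have disj : forall B, (B `&` A1) `&` (B `&` A2) = set0.
  by move=> B; rewrite -subset0 => x [[_ [_ h1]] [_ [_ h2]]].
have split_ : forall B, F B -> mu (B `&` A) = mu (B `&` A1) + mu (B `&` A2).
  move=> B FB; rewrite -madd; [|apply: fgI => // | apply: fgI => // | exact: disj].
  by rewrite -setIUr /A1 /A2 -setIUr setUv setIT.
have h1 := IH A1 (c - lam i) FA1.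
have h2 := IH A2 c FA2.
under eq_bigr => j _ do rewrite (split_ _ (FS j)) mulrDr.
rewrite big_split /= h1; last first.
  move=> x [Ax Six]; have := hA x Ax; rewrite big_cons chi_in // mulr1 => <-.
  by rewrite addrAC subrr add0r.
rewrite h2; last first.
  move=> x [Ax Six]; have := hA x Ax; rewrite big_cons chi_out // mulr0 add0r //.
have -> : mu A = mu A1 + mu A2.
  by have := split_ setT (@fgT _ A'); rewrite !setTI.
rewrite setIC; ring.
Qed.
End Lin.

Lemma forward (R : realType) (T : Type) (A' : set (set T)) (v' : set T -> R) :
  A' set0 -> A' setT -> v' set0 = 0 ->
  bounded_below_on A' v' -> ba_core A' v' !=set0 -> bounded_balanced A' v'.
Proof.
move=> A0 AT v0 [L hL] [mu [[[M hM] madd] [muT hmu]]].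
pose v S := if `[< A' S >] then v' S else mu S.
have vA : forall S, A' S -> v S = v' S by move=> S AS; rewrite /v asboolT.
have vle : forall S, field_gen A' S -> v S <= mu S.
  move=> S FS; rewrite /v; case: asboolP => [AS|//].
  have [->|nT] := pselect (S = setT); first by rewrite muT.
  exact: hmu.
exists v; split; first by rewrite vA.
split.
  exists (Num.min L (- M)) => S FS; rewrite /v; case: asboolP => [AS|nAS].
    by rewrite ge_min hL.
  rewrite ge_min; apply/orP; right.
  by have := hM S FS; rewrite ler_norml => /andP [].
split; last exact: vA.
move=> r S lam [FS [_ [lam0 hsum]]].
apply: (@le_trans _ _ (\sum_(p < r) lam p * mu (S p))).
  by apply: ler_sum => p _; apply: ler_wpM2l => //; apply: vle.
rewrite vA // -muT.
have := @lin_mu R T A' mu madd _ (index_enum 'I_r) S lam FS setT 1 (@fgT _ A').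
rewrite mul1r => <-; last by move=> x _; rewrite hsum chiT.
by under [X in _ <= X]eq_bigr => p _ do rewrite setIT.
Qed.


Section Merge.
Variables (R : realType) (T : Type).
Implicit Types l : seq (set T * R).

Definition merge l : seq (set T * R) :=
  [seq (B, \sum_(z <- l | z.1 == B) z.2) | B <- undup (map fst l)].

Lemma merge_sum l (h : set T -> R) :
  \sum_(w <- merge l) w.2 * h w.1 = \sum_(z <- l) z.2 * h z.1.
Proof.
rewrite big_map /=.
under eq_bigr => S _ do rewrite mulr_suml.
have e : forall S, \sum_(z <- l | z.1 == S) z.2 * h S =
                   \sum_(z <- l) (if z.1 == S then z.2 * h z.1 else 0).
  move=> S; rewrite big_mkcond; apply: eq_bigr => z _.
  by case: eqP => [->|].
under eq_bigr => S _ do rewrite e.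
rewrite exchange_big /=; apply: eq_big_seq => z zl.
rewrite (bigD1_seq z.1) ?undup_uniq //; last by rewrite mem_undup map_f.
rewrite eqxx big1; first by rewrite [LHS]addr0.
by move=> S nS; rewrite eq_sym (negbTE nS).
Qed.

Lemma merge_uniq l : uniq (map fst (merge l)).
Proof.
have -> : map fst (merge l) = undup (map fst l) by rewrite /merge -map_comp; apply: map_id.
exact: undup_uniq.
Qed.

Lemma merge_valid (P : set T -> Prop) l :
  (forall z, z \in l -> P z.1 /\ 0 <= z.2) ->
  (forall z, z \in merge l -> P z.1 /\ 0 <= z.2).
Proof.
move=> hl z /mapP [S]; rewrite mem_undup => /mapP [z0 z0l ->] -> /=.
split; first by have [] := hl _ z0l.
rewrite big_seq_cond; apply: sumr_ge0 => w /andP [wl _].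
by have [] := hl _ wl.
Qed.

Lemma term_le_sum (X : eqType) (l : seq X) (G : X -> R) z :
  (forall w, w \in l -> 0 <= G w) -> z \in l -> G z <= \sum_(w <- l) G w.
Proof.
elim: l => [|a l IH] hG //; rewrite in_cons big_cons => /orP [/eqP ->|zl].
  rewrite lerDl big_seq; apply: sumr_ge0 => y yl; apply: hG; by rewrite in_cons yl orbT.
have hl : forall w, w \in l -> 0 <= G w by move=> w wl; apply: hG; by rewrite in_cons wl orbT.
apply: le_trans (IH hl zl) _; rewrite lerDr; apply: hG; by rewrite in_cons eqxx.
Qed.

End Merge.

Section Bwd.
Variables (R : realType) (T : Type) (A' : set (set T)) (v : set T -> R).
Hypotheses (v0 : v set0 = 0) (bal : balanced_fun (field_gen A') v).
Local Notation F := (field_gen A').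

Definition valid (l : seq (set T * R)) := forall z, z \in l -> F z.1 /\ 0 <= z.2.

Lemma gen_bal l s : valid l -> (forall x, \sum_(z <- l) z.2 * chi z.1 x = s) ->
  \sum_(z <- l) z.2 * v z.1 <= s * v setT.
Proof.
move=> vl hs.
have [sp|sle] := ltrP 0 s.
- rewrite -(merge_sum l v).
  have hm : forall x, \sum_(w <- merge l) w.2 * chi w.1 x = s by move=> x; rewrite (merge_sum l (fun S => chi S x)).
  set m := merge l.
  have vm := merge_valid vl.
  have um := merge_uniq l.
  pose x0 := (set0 : set T, 0 : R).
  pose Sf := fun p : 'I_(size m) => (nth x0 m p).1.
  pose lam := fun p : 'I_(size m) => (nth x0 m p).2 / s.
  have conv : forall h : set T -> R, \sum_(p < size m) lam p * h (Sf p) =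
      s^-1 * \sum_(w <- m) w.2 * h w.1.
    move=> h; rewrite mulr_sumr (big_nth x0) big_mkord; apply: eq_bigr => p _.
    by rewrite /lam /Sf mulrAC mulrC.
  have hb : balanced_coll F Sf lam.
    split; first by move=> p; have [] := vm _ (mem_nth x0 (ltn_ord p)).
    split.
      move=> p q e; apply: val_inj => /=; apply/eqP.
      have hp : (p < size (map fst m))%N by rewrite size_map ltn_ord.
      have hq : (q < size (map fst m))%N by rewrite size_map ltn_ord.
      rewrite -(nth_uniq set0 hp hq um) !(nth_map x0) ?ltn_ord //.
      by apply/eqP; exact: e.
    split.
      move=> p; rewrite /lam divr_ge0 //; last exact: ltW.
      by have [] := vm _ (mem_nth x0 (ltn_ord p)).
    move=> x; rewrite chiT (conv (fun S => chi S x)) hm mulVf // gt_eqF //.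
  have := bal hb; rewrite (conv v).
  set X := \sum_(w <- m) _ => h.
  by rewrite -[X in X <= _](mulVKf (lt0r_neq0 sp)) ler_pM2l.
- have term0 : forall z, z \in l -> z.2 * v z.1 = 0.
    move=> z zl; have [Fz z2] := vl _ zl.
    have [->|/set0P [y zy]] := eqVneq z.1 set0; first by rewrite v0 mulr0.
    have := @term_le_sum R _ l (fun w => w.2 * chi w.1 y) z.
    rewrite hs chi_in // mulr1 => h.
    have h' : z.2 <= s.
      apply: h => //= w wl; apply: mulr_ge0; last exact: chi_ge0.
      by have [] := vl _ wl.
    have -> : z.2 = 0 by lra.
    by rewrite mul0r.
  rewrite big_seq big1 => [|z zl]; last exact: term0.
  have [[y _]|nT] := pselect (exists y : T, True).
    have h0 : 0 <= \sum_(z <- l) z.2 * chi z.1 y.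
      rewrite big_seq; apply: sumr_ge0 => w wl; apply: mulr_ge0; last exact: chi_ge0.
      by have [] := vl _ wl.
    rewrite hs in h0; have -> : s = 0 by lra.
    by rewrite mul0r.
  have -> : setT = set0 :> set T.
    by apply/seteqP; split => y // _; apply: nT; exists y.
  by rewrite v0 mulr0.
Qed.

Definition rfun (l : seq (set T * R)) (t : R) : T -> R^o :=
  fun x => \sum_(z <- l) z.2 * chi z.1 x + t.
Definition rval (l : seq (set T * R)) (t : R) : R :=
  \sum_(z <- l) z.2 * v z.1 + t * v setT.
Definition Wset (g : T -> R^o) := exists l t, valid l /\ rfun l t = g.
Definition Sg (g : T -> R^o) : set R :=
  [set r | exists l t, valid l /\ rfun l t = g /\ r = rval l t].
Definition phi (g : T -> R^o) := sup (Sg g).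

Definition negl (l : seq (set T * R)) := map (fun z => (~` z.1, z.2)) l.
Definition negt (l : seq (set T * R)) t := - (\sum_(z <- l) z.2 + t).
Definition scl (a : R) (l : seq (set T * R)) := map (fun z => (z.1, a * z.2)) l.

Lemma valid_cat l1 l2 : valid l1 -> valid l2 -> valid (l1 ++ l2).
Proof. by move=> h1 h2 z; rewrite mem_cat => /orP [/h1|/h2]. Qed.

Lemma valid_neg l : valid l -> valid (negl l).
Proof.
move=> h z /mapP [z0 z0l ->] /=; have [? ?] := h _ z0l; split => //.
exact: fgC.
Qed.

Lemma valid_scl a l : 0 <= a -> valid l -> valid (scl a l).
Proof.
move=> a0 h z /mapP [z0 z0l ->] /=; have [? ?] := h _ z0l; split => //.
exact: mulr_ge0.
Qed.

Lemma rfun_cat l1 t1 l2 t2 x : rfun (l1 ++ l2) (t1 + t2) x = rfun l1 t1 x + rfun l2 t2 x.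
Proof. rewrite /rfun big_cat /=; ring. Qed.
Lemma rval_cat l1 t1 l2 t2 : rval (l1 ++ l2) (t1 + t2) = rval l1 t1 + rval l2 t2.
Proof. rewrite /rval big_cat /=; ring. Qed.
Lemma rfun_scl a l t x : rfun (scl a l) (a * t) x = a * rfun l t x.
Proof.
rewrite /rfun big_map /= mulrDr mulr_sumr; congr (_ + _).
by apply: eq_bigr => z _; rewrite mulrA.
Qed.
Lemma rval_scl a l t : rval (scl a l) (a * t) = a * rval l t.
Proof.
rewrite /rval big_map /= mulrDr mulr_sumr mulrA; congr (_ + _).
by apply: eq_bigr => z _; rewrite mulrA.
Qed.
Lemma rfun_neg l t x : rfun (negl l) (negt l t) x = - rfun l t x.
Proof.
rewrite /rfun /negt big_map /=.
under eq_bigr => z _ do rewrite chiC mulrBr mulr1.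
rewrite sumrB; ring.
Qed.

Lemma fE (a : R) (g h : T -> R^o) x : (a *: g + h) x = a * g x + h x.
Proof. by []. Qed.

Lemma W0 : Wset 0.
Proof.
exists [::], 0; split => //; apply/funext => x.
by rewrite /rfun big_nil addr0.
Qed.

Lemma Wlin a g h : Wset g -> Wset h -> Wset (a *: g + h).
Proof.
move=> [l1 [t1 [v1 e1]]] [l2 [t2 [v2 e2]]].
have [a0|a0] := leP 0 a.
  exists (scl a l1 ++ l2), (a * t1 + t2); split.
    by apply: valid_cat => //; apply: valid_scl.
  apply/funext => x; rewrite rfun_cat rfun_scl fE -e1 -e2 //.
exists (scl (- a) (negl l1) ++ l2), (- a * negt l1 t1 + t2); split.
  apply: valid_cat => //; apply: valid_scl; last exact: valid_neg.
  by rewrite oppr_ge0 ltW.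
apply/funext => x; rewrite rfun_cat rfun_scl rfun_neg fE -e1 -e2 /=; ring.
Qed.

Lemma rep_bound l t l' t' : valid l -> valid l' ->
  (forall x, rfun l t x = - rfun l' t' x) -> rval l t <= - rval l' t'.
Proof.
move=> vl vl' hx.
have := @gen_bal (l ++ l') (- (t + t')) (valid_cat vl vl').
rewrite /rval big_cat => h.
have : \sum_(z <- l) z.2 * v z.1 + \sum_(z <- l') z.2 * v z.1 <= - (t + t') * v setT.
  apply: h => x; rewrite big_cat /=; have := hx x; rewrite /rfun => e; lra.
move=> h2; lra.
Qed.

Lemma Sg_ub g : Wset g -> has_ubound (Sg g).
Proof.
move=> [l [t [vl e]]]; exists (- rval (negl l) (negt l t)).
move=> _ [l' [t' [vl' [e' ->]]]]; apply: rep_bound => //; first exact: valid_neg.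
by move=> x; rewrite rfun_neg opprK e e'.
Qed.

Lemma phi_ub g r : Wset g -> Sg g r -> r <= phi g.
Proof. by move=> Wg; apply: ub_le_sup; apply: Sg_ub. Qed.

Lemma phi_least g b : Wset g -> (forall r, Sg g r -> r <= b) -> phi g <= b.
Proof.
move=> [l [t [vl e]]] h; apply: ge_sup; last exact: h.
by exists (rval l t), l, t.
Qed.

Lemma phi_sadd g h : Wset g -> Wset h -> phi g + phi h <= phi (g + h).
Proof.
move=> Wg Wh.
have Wgh : Wset (g + h) by have := Wlin 1 Wg Wh; rewrite scale1r.
have key : forall r r', Sg g r -> Sg h r' -> r + r' <= phi (g + h).
  move=> _ _ [l [t [vl [e ->]]]] [l' [t' [vl' [e' ->]]]].
  rewrite -rval_cat; apply: phi_ub => //; exists (l ++ l'), (t + t'); split.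
    exact: valid_cat.
  split => //; apply/funext => x; rewrite rfun_cat e e' //.
have : phi g <= phi (g + h) - phi h.
  apply: phi_least => // r Sr.
  have : phi h <= phi (g + h) - r.
    apply: phi_least => // r' Sr'; have := key _ _ Sr Sr'; lra.
  lra.
lra.
Qed.

Lemma hom_le a g : 0 < a -> Wset g -> a * phi g <= phi (a *: g).
Proof.
move=> ap Wg.
have Wag : Wset (a *: g) by have := Wlin a Wg W0; rewrite addr0.
have : phi g <= a^-1 * phi (a *: g).
  apply: phi_least => // _ [l [t [vl [e ->]]]].
  rewrite -(ler_pM2l ap) mulrA mulfV ?lt0r_neq0 // mul1r.
  rewrite -rval_scl; apply: phi_ub => //; exists (scl a l), (a * t); split.
    by apply: valid_scl => //; exact: ltW.
  by split => //; apply/funext => x; rewrite rfun_scl e.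
by move=> h; have := ler_wpM2l (ltW ap) h; rewrite mulVKf ?lt0r_neq0.
Qed.

Lemma phi_hom a g : 0 < a -> Wset g -> phi (a *: g) = a * phi g.
Proof.
move=> ap Wg; apply/le_anti/andP; split; last exact: hom_le.
have Wag : Wset (a *: g) by have := Wlin a Wg W0; rewrite addr0.
have := @hom_le a^-1 _ (ltac:(by rewrite invr_gt0)) Wag.
rewrite scalerA mulVf ?lt0r_neq0 // scale1r => h.
by have := ler_wpM2l (ltW ap) h; rewrite mulVKf ?lt0r_neq0.
Qed.

End Bwd.



Lemma core_exists (R : realType) (T : Type) (A' : set (set T)) (v : set T -> R) :
  v set0 = 0 -> bounded_below_on (field_gen A') v -> balanced_fun (field_gen A') v ->
  exists mu, is_ba (field_gen A') mu /\ mu setT = v setT /\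
    (forall S, field_gen A' S -> v S <= mu S).
Proof.
move=> v0 [L hL] bal.
have psub : forall x y, Wset A' x -> Wset A' y ->
    - phi A' v x + - phi A' v y >= - phi A' v (x + y).
  by move=> x y Wx Wy; have := phi_sadd v0 bal Wx Wy; lra.
have phom : forall (a : R) (x : T -> R^o), 0 < a -> Wset A' x ->
    - phi A' v (a *: x) = a * - phi A' v x.
  by move=> a x ap Wx; rewrite (phi_hom v0 bal ap Wx) mulrN.
have [f [flin fle]] := @hahn_banach R (T -> R^o) (Wset A') (fun g => - phi A' v g)
  (W0 R A') (@Wlin R T A') psub phom.
have f0 : f 0 = 0.
  have := flin 1 _ _ (W0 R A') (W0 R A'); rewrite scaler0 addr0 mul1r => h; lra.
have Wchi : forall S, field_gen A' S -> Wset A' (chi (R:=R) S).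
  move=> S FS; exists [:: (S, 1)], 0; split.
    by move=> z; rewrite inE => /eqP -> /=; split.
  by apply/funext => x; rewrite /rfun big_cons big_nil mul1r !addr0.
pose mu S := - f (chi S).
have mu_ge : forall S, field_gen A' S -> v S <= mu S.
  move=> S FS; have := fle _ (Wchi _ FS).
  have : v S <= phi A' v (chi S).
    apply: phi_ub => //; first by apply: Wchi.
    exists [:: (S, 1)], 0; split.
      by move=> z; rewrite inE => /eqP -> /=; split.
    split; first by apply/funext => x; rewrite /rfun big_cons big_nil mul1r !addr0.
    by rewrite /rval big_cons big_nil mul1r mul0r !addr0.
  rewrite /mu; lra.
have FT := @fgT _ A'.
have WnT : Wset A' (- chi (R:=R) setT).
  exists [::], (-1); split => //; apply/funext => x.
  by rewrite /rfun big_nil add0r -[RHS]/(- (chi (R:=R) setT x)) chiT.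
have muT : mu setT <= v setT.
  have := fle _ WnT.
  have : - v setT <= phi A' v (- chi (R:=R) setT).
    apply: phi_ub => //; exists [::], (-1); split => //.
    split; first by apply/funext => x; rewrite /rfun big_nil add0r -[RHS]/(- (chi (R:=R) setT x)) chiT.
    by rewrite /rval big_nil add0r mulN1r.
  have := flin (-1) _ _ (Wchi _ FT) (W0 R A'); rewrite scaleN1r addr0 f0 addr0 mulN1r => ->.
  rewrite /mu; lra.
have muT' : mu setT = v setT by apply/le_anti/andP; split => //; apply: mu_ge.
have chiU : forall S U, S `&` U = set0 -> chi (S `|` U) = chi S + chi U :> (T -> R^o).
  move=> S U SU; apply/funext => x.
  rewrite -[RHS]/(chi (R:=R) S x + chi (R:=R) U x).
  have [Sx|nSx] := pselect (S x).
    have nUx : ~ U x by move=> Ux; have : (S `&` U) x by []; rewrite SU.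
    have SUx : (S `|` U) x by left.
    by rewrite (@chi_in R _ _ _ SUx) (@chi_in R _ _ _ Sx) (@chi_out R _ _ _ nUx) addr0.
  have [Ux|nUx] := pselect (U x).
    have SUx : (S `|` U) x by right.
    by rewrite (@chi_in R _ _ _ SUx) (@chi_out R _ _ _ nSx) (@chi_in R _ _ _ Ux) add0r.
  have nSUx : ~ (S `|` U) x by case.
  by rewrite (@chi_out R _ _ _ nSUx) (@chi_out R _ _ _ nSx) (@chi_out R _ _ _ nUx) addr0.
have madd : forall S U, field_gen A' S -> field_gen A' U -> S `&` U = set0 ->
    mu (S `|` U) = mu S + mu U.
  move=> S U FS FU SU; rewrite /mu chiU //.
  have := flin 1 _ _ (Wchi _ FS) (Wchi _ FU); rewrite scale1r mul1r => ->.
  by rewrite opprD.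
have mC : forall S, field_gen A' S -> mu S + mu (~` S) = v setT.
  move=> S FS; rewrite -madd ?setUv //; [exact: fgC | by rewrite setICr].
exists mu; split; last by split => //.
split => //.
exists (`|L| + `|v setT - L|) => S FS.
have h1 := mu_ge _ FS; have h2 := hL _ FS.
have h3 := mu_ge _ (fgC FS); have h4 := hL _ (fgC FS).
have h5 := mC _ FS.
have h6 := ler_norm (- L); rewrite normrN in h6.
have h7 := ler_norm (v setT - L).
have h8 := normr_ge0 L; have h9 := normr_ge0 (v setT - L).
rewrite ler_norml; apply/andP; split; lra.
Qed.

Unset Implicit Arguments.
Theorem theorem8 (R : realType) (T : Type) (A' : set (set T))
  (v' : set T -> R) :
  A' set0 -> A' setT -> v' set0 = 0 ->
  bounded_below_on A' v' ->
  (ba_core A' v' !=set0 <-> bounded_balanced A' v').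
Proof.
move=> A0 AT v0 bb; split; first exact: forward.
move=> [v [v0' [bbv [bal agree]]]].
have [mu [bmu [muT hmu]]] := core_exists v0' bbv bal.
exists mu; split => //; split; first by rewrite muT agree.
by move=> S AS _; rewrite -agree //; apply: hmu; apply: fg_sub.
Qed.
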